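(* Let $\sim$ be a congruence on a finitely generated commutative monoid $Q$ and $P\subset Q$ a prime ideal. Then $P$ is an associated prime ideal of $\sim$ if and only if every primary decomposition of $\sim$ (i.e. every expression of $\sim$ as the common refinement of finitely many primary congruences) has a $P$-primary component. Moreover, if $P$ is not associated to $\sim$, then every $P$-primary component in every primary decomposition of $\sim$ is redundant: omitting it leaves another primary decomposition of $\sim$.
   Context: $Q$ is written additively with identity $0$. An element $\infty$ of a commutative monoid $M$ is \emph{nil} if $m+\infty=\infty$ for all $m$; $m$ is \emph{nilpotent} if $nm$ is nil for some $n\in\mathbb N$, \emph{cancellative} if $m+a=m+b\Rightarrow a=b$. An \emph{ideal} of $Q$ is a subset $T$ with $T+Q\subseteq T$ (empty set allowed); an ideal $P\ne Q$ is \emph{prime} if $a+b\in P\Rightarrow a\in P$ or $b\in P$; by convention $\varnothing$ is a prime ideal exactly when $Q$ has no nil. A \emph{congruence} is an equivalence relation $\sim$ on $Q$ with $a\sim b\Rightarrow a+c\sim b+c$; $\bar Q=Q/\sim$, $\bar q$ the class of $q$. Common refinement = intersection in $Q\times Q$. A congruence is \emph{primary} if every element of $\bar Q$ is nilpotent or cancellative, and then \emph{$P$-primary} for the prime $P=\{q:\bar q\text{ nilpotent}\}$. Localization: for a prime $P$, $\bar Q_P$ is the monoid of formal differences $\bar a-\bar u$ ($a\in Q$, $u\in Q\setminus P$) with $\bar a-\bar u=\bar b-\bar v$ iff $\bar w+\bar v+\bar a=\bar w+\bar u+\bar b$ in $\bar Q$ for some $w\in Q\setminus P$; elements $p\in Q$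 have images $\bar p=\bar p-\bar 0$ in $\bar Q_P$. $P$ is an \emph{associated prime ideal} of $\sim$ if the relation on $\bar Q_P$ given by $x\equiv y$ iff $x+\bar p=y+\bar p$ for all $p\in P$ is not the identity relation (for $P=\varnothing$ this relation is the universal one, so $\varnothing$ is associated iff $\bar Q_\varnothing$ has more than one element). *)

(* Defs.v *)
From Stdlib Require Import List.
Import ListNotations.
Set Implicit Arguments.

Record CMonoid := {
  carrier :> Type;
  add : carrier -> carrier -> carrier;
  zero : carrier;
  add_assoc : forall a b c, add a (add b c) = add (add a b) c;
  add_comm : forall a b, add a b = add b a;
  add_0l : forall a, add zero a = a
}.

Section Defs.
Context {Q : CMonoid}.
Local Notation "a + b" := (add Q a b).
Local Notation "0" := (zero Q).

Inductive generated (gens : list Q) : Q -> Prop :=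
| gen_zero : generated gens 0
| gen_in : forall g, In g gens -> generated gens g
| gen_add : forall a b, generated gens a -> generated gens b -> generated gens (a + b).

Definition fin_generated_ : Prop :=
  exists gens : list Q, forall q, generated gens q.

Fixpoint nsmul (n : nat) (q : Q) : Q :=
  match n with O => 0 | S k => q + nsmul k q end.

Definition is_nil (i : Q) : Prop := forall m, m + i = i.

Definition ideal (T : Q -> Prop) : Prop := forall a b, T a -> T (a + b).

(** Prime ideal, with the convention that the empty ideal is prime
    exactly when Q has no nil. *)
Definition prime_ideal (P : Q -> Prop) : Prop :=
  ideal P /\ (exists q, ~ P q) /\
  (forall a b, P (a + b) -> P a \/ P b) /\
  ((forall q, ~ P q) -> ~ exists i, is_nil i).

Definition congruence (R : Q -> Q -> Prop) : Prop :=
  (forall a, R a a) /\ (forall a b, R a b -> R b a) /\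
  (forall a b c, R a b -> R b c -> R a c) /\
  (forall a b c, R a b -> R (a + c) (b + c)).

(** Properties of the class of q in Q/R, expressed on representatives. *)
Definition cls_nil (R : Q -> Q -> Prop) (i : Q) : Prop := forall m, R (m + i) i.
Definition cls_nilpotent (R : Q -> Q -> Prop) (q : Q) : Prop :=
  exists n : nat, cls_nil R (nsmul n q).
Definition cls_cancellative (R : Q -> Q -> Prop) (q : Q) : Prop :=
  forall a b, R (q + a) (q + b) -> R a b.

Definition primary (R : Q -> Q -> Prop) : Prop :=
  congruence R /\ forall q, cls_nilpotent R q \/ cls_cancellative R q.

Definition P_primary (R : Q -> Q -> Prop) (P : Q -> Prop) : Prop :=
  primary R /\ forall q, P q <-> cls_nilpotent R q.

(** Equality in the localization (Q/R)_P of the formal differences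
    [a - u] and [b - v] (u, v not in P). *)
Definition loc_eq (R : Q -> Q -> Prop) (P : Q -> Prop) (a u b v : Q) : Prop :=
  exists w, ~ P w /\ R (w + v + a) (w + u + b).

(** P is associated to R: the relation x == y iff x + p = y + p for all p in P
    on (Q/R)_P is not the identity relation. *)
Definition associated (R : Q -> Q -> Prop) (P : Q -> Prop) : Prop :=
  exists a u b v, ~ P u /\ ~ P v /\
    (forall p, P p -> loc_eq R P (a + p) u (b + p) v) /\
    ~ loc_eq R P a u b v.

Definition primary_decomposition (R : Q -> Q -> Prop) (Rs : list (Q -> Q -> Prop)) : Prop :=
  (forall C, In C Rs -> primary C) /\
  (forall a b, R a b <-> (forall C, In C Rs -> C a b)).

End Defs.

Definition fin_generated (Q : CMonoid) : Prop := @fin_generated_ Q.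

(* Main.v *)
Require Import Defs.
From Stdlib Require Import List Arith Lia Classical ClassicalEpsilon.
Import ListNotations.

Section Alg.
Variable Q : CMonoid.
Local Notation "a +' b" := (add Q a b) (at level 50, left associativity).
Local Notation "0'" := (zero Q).

Lemma addA (a b c : Q) : a +' (b +' c) = a +' b +' c.
Proof. apply add_assoc. Qed.
Lemma addC (a b : Q) : a +' b = b +' a.
Proof. apply add_comm. Qed.
Lemma add0l (a : Q) : 0' +' a = a.
Proof. apply add_0l. Qed.
Lemma add0r (a : Q) : a +' 0' = a.
Proof. rewrite addC; apply add0l. Qed.

Lemma addCA (a b c : Q) : a +' (b +' c) = b +' (a +' c).
Proof. rewrite !addA, (addC a b); reflexivity. Qed.

Lemma addACA (a b c d : Q) : (a +' b) +' (c +' d) = (a +' c) +' (b +' d).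
Proof. rewrite <- !addA; f_equal; apply addCA. Qed.

Lemma nsmul_add m n (g : Q) : nsmul (m + n) g = nsmul m g +' nsmul n g.
Proof. induction m; simpl. now rewrite add0l. now rewrite IHm, addA. Qed.

Definition vec := nat -> nat.
Definition shift (a : vec) : vec := fun k => a (S k).
Definition vadd (a b : vec) : vec := fun k => a k + b k.
Definition eqv m (a b : vec) := forall k, k < m -> a k = b k.
Definition lev m (a b : vec) := forall k, k < m -> a k <= b k.

Fixpoint evalL (l : list Q) (v : vec) : Q :=
  match l with [] => 0' | g :: l' => nsmul (v 0) g +' evalL l' (shift v) end.

Fixpoint lexlt (m : nat) (a b : vec) : Prop :=
  match m with 0 => False
  | S m' => a 0 < b 0 \/ (a 0 = b 0 /\ lexlt m' (shift a) (shift b)) end.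

Lemma evalL_eqv l a b : eqv (length l) a b -> evalL l a = evalL l b.
Proof.
  revert a b; induction l as [|g l IH]; intros a b H; simpl; auto.
  rewrite (H 0) by (simpl; lia). f_equal. apply IH.
  intros k hk; apply H; simpl; lia.
Qed.

Lemma evalL_add l a b : evalL l (vadd a b) = evalL l a +' evalL l b.
Proof.
  revert a b; induction l as [|g l IH]; intros a b; simpl.
  - now rewrite add0l.
  - unfold vadd at 1. rewrite nsmul_add.
    change (shift (vadd a b)) with (vadd (shift a) (shift b)).
    rewrite IH. apply addACA.
Qed.

Lemma evalL_zero l : evalL l (fun _ => 0) = 0'.
Proof. induction l; simpl; auto. rewrite add0l. apply IHl. Qed.

Lemma evalL_surj l q : generated l q -> exists v, evalL l v = q.
Proof.
  induction 1 as [|g Hg|a b _ [va Ha] _ [vb Hb]].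
  - exists (fun _ => 0). apply evalL_zero.
  - induction l as [|h l IH]; [destruct Hg|].
    destruct Hg as [<-|Hg].
    + exists (fun k => match k with 0 => 1 | _ => 0 end). simpl.
      unfold shift; simpl. rewrite evalL_zero, add0r, add0r. reflexivity.
    + destruct (IH Hg) as [v Hv].
      exists (fun k => match k with 0 => 0 | S k => v k end). simpl.
      rewrite add0l. exact Hv.
  - exists (vadd va vb). rewrite evalL_add, Ha, Hb; reflexivity.
Qed.

Lemma lexlt_add m a b c : lexlt m a b -> lexlt m (vadd a c) (vadd b c).
Proof.
  revert a b c; induction m; simpl; auto.
  intros a b c [H|[H1 H2]]; [left; unfold vadd; lia|right].
  split. unfold vadd; lia. apply (IHm _ _ (shift c)) in H2. exact H2.
Qed.

Lemma lexlt_eqv m a a' b b' : eqv m a a' -> eqv m b b' -> lexlt m a b -> lexlt m a' b'.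
Proof.
  revert a a' b b'; induction m; simpl; auto.
  intros a a' b b' Ha Hb [H|[H1 H2]].
  - left. rewrite <- (Ha 0), <- (Hb 0) by lia. exact H.
  - right. split. rewrite <- (Ha 0), <- (Hb 0) by lia. exact H1.
    apply (IHm (shift a) _ (shift b)); auto.
    + intros k hk; apply Ha; lia.
    + intros k hk; apply Hb; lia.
Qed.

Lemma lexlt_tri m a b : lexlt m a b \/ lexlt m b a \/ eqv m a b.
Proof.
  revert a b; induction m; intros a b; simpl.
  - right; right; intros k hk; lia.
  - destruct (lt_eq_lt_dec (a 0) (b 0)) as [[H|H]|H]; auto.
    destruct (IHm (shift a) (shift b)) as [H1|[H1|H1]]; auto.
    right; right. intros [|k] hk; auto. apply H1; lia.
Qed.

Lemma lexlt_wf m : well_founded (lexlt m).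
Proof.
  induction m.
  - intros a; constructor; intros b [].
  - intros a.
    remember (a 0) as n0 eqn:E. revert a E.
    induction n0 as [n0 IHo] using lt_wf_ind. intros a E.
    remember (shift a) as t eqn:Et. revert a E Et.
    induction (IHm t) as [t _ IHi]. intros a E Et.
    constructor. intros b [H|[H1 H2]].
    + apply (IHo (b 0)); auto. lia.
    + apply (IHi (shift b)); auto. subst t; auto. lia.
Qed.

Lemma argmin (f : nat -> nat) i : exists j, i <= j /\ forall j', i <= j' -> f j <= f j'.
Proof.
  assert (forall v j0, i <= j0 -> f j0 = v -> exists j, i <= j /\ forall j', i <= j' -> f j <= f j').
  { intro v; induction v as [v IH] using lt_wf_ind. intros j0 h1 h2.
    destruct (classic (forall j', i <= j' -> f j0 <= f j')) as [H|H].
    - eauto.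
    - apply not_all_ex_not in H. destruct H as [j' H].
      apply (IH (f j') ltac:(lia) j'); auto. lia. }
  eapply (H (f i) i); auto.
Qed.

End Alg.
Arguments addA {Q}. Arguments addC {Q}. Arguments add0l {Q}. Arguments add0r {Q}.
Arguments addCA {Q}. Arguments addACA {Q}. Arguments nsmul_add {Q}.

Lemma nondec_sub (f : nat -> nat) :
  exists psi : nat -> nat, (forall i, psi i < psi (S i)) /\ forall i, f (psi i) <= f (psi (S i)).
Proof.
  pose (am := fun i => proj1_sig (constructive_indefinite_description _ (argmin f i))).
  assert (Ham : forall i, i <= am i /\ forall j', i <= j' -> f (am i) <= f j').
  { intro i; exact (proj2_sig (constructive_indefinite_description _ (argmin f i))). }
  pose (st := fix st k := match k with 0 => 0 | S k => S (am (st k)) end).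
  exists (fun k => am (st k)). split; intro i; simpl.
  - destruct (Ham (S (am (st i)))); lia.
  - apply (proj2 (Ham (st i))). destruct (Ham (S (am (st i)))); destruct (Ham (st i)); lia.
Qed.

Lemma mono_of_step (phi : nat -> nat) : (forall i, phi i < phi (S i)) -> forall i j, i < j -> phi i < phi j.
Proof. intros H i j hij; induction hij; [apply H| specialize (H m); lia]. Qed.

Lemma mono_of_step_le (phi : nat -> nat) : (forall i, phi i < phi (S i)) -> forall i j, i <= j -> phi i <= phi j.
Proof. intros H i j hij; induction hij; [lia| specialize (H m); lia]. Qed.

Lemma lev_chain m (g : nat -> vec) : (forall i, lev m (g i) (g (S i))) -> forall i j, i <= j -> lev m (g i) (g j).
Proof.
  intros H i j hij; induction hij; intros k hk; [lia|].
  specialize (IHhij k hk); specialize (H m0 k hk); lia.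
Qed.

Lemma dickson_sub m (s : nat -> vec) :
  exists phi, (forall i, phi i < phi (S i)) /\ forall i, lev m (s (phi i)) (s (phi (S i))).
Proof.
  induction m.
  - exists (fun i => i). split; intros; [lia|]. intros k hk; lia.
  - destruct IHm as [phi [H1 H2]].
    destruct (nondec_sub (fun i => s (phi i) m)) as [psi [G1 G2]].
    exists (fun i => phi (psi i)). split.
    + intro i; apply (mono_of_step phi H1); auto.
    + intros i k hk.
      assert (k < m \/ k = m) as [hk' | ->] by lia.
      * apply (lev_chain m (fun i => s (phi i)) H2); auto.
        specialize (G1 i); lia.
      * apply G2.
Qed.

Lemma dickson m (s : nat -> vec) : exists i j, i < j /\ lev m (s i) (s j).
Proof.
  destruct (dickson_sub m s) as [phi [H1 H2]]. exists (phi 0), (phi 1). auto.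
Qed.

Lemma acc_ideals m (I : nat -> vec -> Prop) :
  (forall k a, I k a -> I (S k) a) -> (forall k a b, I k a -> lev m a b -> I k b) ->
  exists K, forall k, K <= k -> forall a, I k a -> I K a.
Proof.
  intros Hmon Hup.
  assert (Hmon' : forall k k', k <= k' -> forall a, I k a -> I k' a).
  { intros k k' h; induction h; auto. }
  apply NNPP; intro Hn.
  assert (Hs : forall K, exists p : nat * vec, K <= fst p /\ I (fst p) (snd p) /\ ~ I K (snd p)).
  { intro K. apply NNPP; intro H. apply Hn. exists K. intros k hk a ha.
    apply NNPP; intro hna. apply H. exists (k, a); auto. }
  pose (nx := fun K => proj1_sig (constructive_indefinite_description _ (Hs K))).
  assert (Hnx : forall K, K <= fst (nx K) /\ I (fst (nx K)) (snd (nx K)) /\ ~ I K (snd (nx K))).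
  { intro K; exact (proj2_sig (constructive_indefinite_description _ (Hs K))). }
  pose (Ks := fix Ks j := match j with 0 => 0 | S j => fst (nx (Ks j)) end).
  assert (HKs : forall i j, i <= j -> Ks i <= Ks j).
  { intros i j h; induction h; auto. simpl. destruct (Hnx (Ks m0)); lia. }
  destruct (dickson m (fun j => snd (nx (Ks j)))) as [i [j [hij hl]]].
  destruct (Hnx (Ks i)) as [_ [Hi _]]. destruct (Hnx (Ks j)) as [_ [_ Hj]].
  apply Hj. apply (Hup _ (snd (nx (Ks i)))); auto.
  apply (Hmon' (fst (nx (Ks i)))); auto. apply (HKs (S i) j); lia.
Qed.

Section Acc.
Variable Q : CMonoid.
Local Notation "a +' b" := (add Q a b) (at level 50, left associativity).
Local Notation "0'" := (zero Q).

Lemma acc_cong (hfg : fin_generated Q) (rho : nat -> Q -> Q -> Prop) :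
  (forall k, congruence (rho k)) -> (forall k x y, rho k x y -> rho (S k) x y) ->
  exists K, forall k, K <= k -> forall x y, rho k x y -> rho K x y.
Proof.
  intros Hc Hmon. destruct hfg as [gens Hg].
  assert (Hmon' : forall k k', k <= k' -> forall x y, rho k x y -> rho k' x y).
  { intros k k' h; induction h; auto. }
  set (m := length gens). set (ev := evalL Q gens).
  set (I := fun k a => exists b, lexlt m b a /\ rho k (ev a) (ev b)).
  destruct (acc_ideals m I) as [K HK].
  - intros k a [b [h1 h2]]. exists b; auto.
  - intros k a a' [b [h1 h2]] hl.
    set (c := fun i => a' i - a i).
    assert (He : eqv m (vadd a c) a') by (intros i hi; unfold vadd, c; specialize (hl i hi); lia).
    exists (vadd b c). split.
    + apply (lexlt_eqv m (vadd b c) _ (vadd a c)); [intros i hi; auto|auto|].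
      apply lexlt_add; auto.
    + unfold ev. rewrite <- (evalL_eqv Q gens _ _ He), !evalL_add.
      destruct (Hc k) as [_ [_ [_ H4]]]. apply H4; auto.
  - exists K. intros k hk x y hxy.
    destruct (Hc K) as [R1 [R2 [R3 R4]]].
    destruct (Hc k) as [S1 [S2 [S3 S4]]].
    assert (Hmin : forall a, exists a', rho K (ev a) (ev a') /\ ~ I K a').
    { intro a. induction a as [a IH] using (well_founded_ind (lexlt_wf m)).
      destruct (classic (I K a)) as [[b [h1 h2]]|H].
      - destruct (IH b h1) as [b' [h3 h4]]. exists b'; split; eauto.
      - exists a; split; auto. }
    destruct (evalL_surj Q gens x (Hg x)) as [a Ha].
    destruct (evalL_surj Q gens y (Hg y)) as [b Hb].
    destruct (Hmin a) as [a' [Ha1 Ha2]]. destruct (Hmin b) as [b' [Hb1 Hb2]].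
    assert (Hab : rho k (ev a') (ev b')).
    { apply (S3 _ (ev a)). apply S2. apply (Hmon' K); auto.
      apply (S3 _ (ev b)). fold ev in Ha, Hb. rewrite Ha, Hb; auto. apply (Hmon' K); auto. }
    fold ev in Ha, Hb. subst x y.
    destruct (lexlt_tri m a' b') as [H|[H|H]].
    + exfalso; apply Hb2. apply (HK k hk). exists a'; split; auto.
    + exfalso; apply Ha2. apply (HK k hk). exists b'; split; auto.
    + apply (R3 _ (ev a')); auto. apply (R3 _ (ev b')); auto.
      unfold ev; rewrite (evalL_eqv Q gens a' b' H); auto.
Qed.

Definition decomposable (R : Q -> Q -> Prop) := exists Rs, primary_decomposition R Rs.

Lemma nsmul_S k (q : Q) : nsmul (S k) q = q +' nsmul k q.
Proof. reflexivity. Qed.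

Lemma split_step (hfg : fin_generated Q) (rho : Q -> Q -> Prop) :
  congruence rho -> ~ primary rho ->
  exists r1 r2, congruence r1 /\ congruence r2 /\
    (forall x y, rho x y -> r1 x y) /\ (forall x y, rho x y -> r2 x y) /\
    (exists x y, r1 x y /\ ~ rho x y) /\ (exists x y, r2 x y /\ ~ rho x y) /\
    (forall x y, r1 x y -> r2 x y -> rho x y).
Proof.
  intros Hc Hnp.
  destruct Hc as [R1 [R2 [R3 R4]]].
  assert (exists q, ~ cls_nilpotent rho q /\ ~ cls_cancellative rho q) as [q [Hn Hcn]].
  { apply NNPP; intro H. apply Hnp. split. repeat split; auto.
    intro q. apply NNPP; intro H'. apply H. exists q. tauto. }
  set (tau := fun k a b => rho (nsmul k q +' a) (nsmul k q +' b)).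
  destruct (acc_cong hfg tau) as [N HN].
  - intro k. unfold tau; repeat split; intros; eauto.
    all: intros; eauto. rewrite !addA. apply R4; auto.
  - intros k a b h. unfold tau. simpl. rewrite <- !addA. rewrite (addC q), (addC q).
    apply R4; auto.
  - set (nq := nsmul N q).
    set (J := fun x => exists c, rho x (nq +' c)).
    exists (fun a b => rho a b \/ (J a /\ J b)), (tau N).
    split; [|split; [|split; [|split; [|split; [|split]]]]].
    + split; [|split; [|split]].
      * intros; left; auto.
      * intros a b [h|h]; [left; auto|right; tauto].
      * intros a b c [h|[[c1 h1] [c2 h2]]] [h'|[[c3 h3] [c4 h4]]].
        -- left; eauto.
        -- right. split. exists c3; eauto. exists c4; auto.
        -- right. split. exists c1; auto. exists c2; eauto.
        -- right. split. exists c1; auto. exists c4; auto.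
      * intros a b c [h|[[c1 h1] [c2 h2]]]; [left; auto|right].
        split; [exists (c1 +' c)|exists (c2 +' c)]; rewrite addA; apply R4; auto.
    + split; [|split; [|split]]; unfold tau; intros; eauto. rewrite !addA. apply R4; auto.
    + intros; left; auto.
    + intros x y h; unfold tau. rewrite (addC _ x), (addC _ y). apply R4; auto.
    + apply NNPP; intro H. apply Hn. exists N. intro m.
      apply NNPP; intro H'. apply H. exists (m +' nq), nq. split; auto.
      right. split. exists m. rewrite addC; auto. exists 0'. rewrite add0r; auto.
    + apply NNPP; intro H. apply Hcn. intros a b h.
      apply NNPP; intro H'. apply H. exists a, b. split; auto.
      apply (HN (S N)); auto. unfold tau.
      assert (forall k, rho (nsmul (S k) q +' a) (nsmul (S k) q +' b)).
      { induction k.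
        - simpl. rewrite !add0r. exact h.
        - change (nsmul (S (S k)) q) with (q +' nsmul (S k) q).
          rewrite <- !addA, (addC q (nsmul (S k) q +' a)), (addC q (nsmul (S k) q +' b)).
          apply R4; exact IHk. }
      apply H0.
    + intros x y [h|[[c1 h1] [c2 h2]]] h2'; auto.
      apply (R3 _ (nq +' c1)); auto. apply (R3 _ (nq +' c2)); auto.
      assert (tau (N + N) c1 c2).
      { unfold tau. rewrite nsmul_add. fold nq. rewrite <- !addA.
        apply (R3 _ (nq +' y)). apply (R3 _ (nq +' x)).
        - rewrite (addC nq (nq +' c1)), (addC nq x). apply R4. auto.
        - exact h2'.
        - rewrite (addC nq y), (addC nq (nq +' c2)). apply R4. auto. }
      apply (HN (N + N)); [lia|auto].
Qed.
End Acc.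

Section Ex.
Variable Q : CMonoid.
Local Notation "a +' b" := (add Q a b) (at level 50, left associativity).
Local Notation "0'" := (zero Q).

Lemma decomp_app (rho r1 r2 : Q -> Q -> Prop) Rs1 Rs2 :
  (forall x y, rho x y -> r1 x y) -> (forall x y, rho x y -> r2 x y) ->
  (forall x y, r1 x y -> r2 x y -> rho x y) ->
  primary_decomposition r1 Rs1 -> primary_decomposition r2 Rs2 ->
  primary_decomposition rho (Rs1 ++ Rs2).
Proof.
  intros H1 H2 H3 [P1 E1] [P2 E2]. split.
  - intros C hC. apply in_app_or in hC as [hC|hC]; auto.
  - intros a b; split.
    + intros h C hC. apply in_app_or in hC as [hC|hC].
      * apply (proj1 (E1 a b)); auto.
      * apply (proj1 (E2 a b)); auto.
    + intros h. apply H3.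
      * apply (proj2 (E1 a b)). intros C hC; apply h, in_or_app; auto.
      * apply (proj2 (E2 a b)). intros C hC; apply h, in_or_app; auto.
Qed.

Lemma exists_decomp (hfg : fin_generated Q) (R : Q -> Q -> Prop) :
  congruence R -> decomposable Q R.
Proof.
  intros HR. apply NNPP; intro HnR.
  set (X := {r : Q -> Q -> Prop | congruence r /\ ~ decomposable Q r}).
  assert (Hstep : forall x : X, exists y : X,
    (forall a b, proj1_sig x a b -> proj1_sig y a b) /\
    exists a b, proj1_sig y a b /\ ~ proj1_sig x a b).
  { intros [r [Hc Hnd]]. simpl.
    assert (Hnp : ~ primary r).
    { intro Hp. apply Hnd. exists [r]. split.
      - intros C [<-|[]]; auto.
      - intros a b; split.
        + intros h C [<-|[]]; auto.
        + intros h; apply h; left; auto. }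
    destruct (split_step Q hfg r Hc Hnp) as [r1 [r2 [c1 [c2 [i1 [i2 [s1 [s2 I]]]]]]]].
    destruct (classic (decomposable Q r1)) as [[Rs1 D1]|N1].
    - destruct (classic (decomposable Q r2)) as [[Rs2 D2]|N2].
      + exfalso; apply Hnd. exists (Rs1 ++ Rs2). apply (decomp_app r r1 r2); auto.
      + exists (exist _ r2 (conj c2 N2)). simpl. split; auto.
    - exists (exist _ r1 (conj c1 N1)). simpl. split; auto. }
  pose (nx := fun x => proj1_sig (constructive_indefinite_description _ (Hstep x))).
  assert (Hnx : forall x, (forall a b, proj1_sig x a b -> proj1_sig (nx x) a b) /\
    exists a b, proj1_sig (nx x) a b /\ ~ proj1_sig x a b).
  { intro x; exact (proj2_sig (constructive_indefinite_description _ (Hstep x))). }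
  pose (sq := fix sq k := match k with 0 => exist _ R (conj HR HnR) : X | S k => nx (sq k) end).
  destruct (acc_cong Q hfg (fun k => proj1_sig (sq k))) as [K HK].
  - intro k. exact (proj1 (proj2_sig (sq k))).
  - intros k; apply (proj1 (Hnx (sq k))).
  - destruct (proj2 (Hnx (sq K))) as [a [b [h1 h2]]].
    apply h2. apply (HK (S K)); auto.
Qed.
End Ex.

Section Main.
Variable Q : CMonoid.
Local Notation "a +' b" := (add Q a b) (at level 50, left associativity).
Local Notation "0'" := (zero Q).

Lemma notP0 (P : Q -> Prop) : prime_ideal P -> ~ P 0'.
Proof.
  intros [Hi [[q Hq] _]] H0. apply Hq. rewrite <- (add0l q). apply Hi; auto.
Qed.

Lemma notP_add (P : Q -> Prop) : prime_ideal P -> forall a b, ~ P a -> ~ P b -> ~ P (a +' b).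
Proof. intros [_ [_ [Hp _]]] a b ha hb h. destruct (Hp a b h); auto. Qed.

Lemma notP_nsmul (P : Q -> Prop) : prime_ideal P -> forall n x, ~ P x -> ~ P (nsmul n x).
Proof.
  intros HP n x hx; induction n; simpl.
  - apply notP0; auto.
  - apply notP_add; auto.
Qed.

Lemma rearr1 (w1 w2 X : Q) : w1 +' w2 +' X = w1 +' X +' w2.
Proof. rewrite <- addA, (addC w2 X), addA. reflexivity. Qed.

Lemma comb (P : Q -> Prop) (HP : prime_ideal P) (Rs : list (Q -> Q -> Prop)) X Y :
  (forall C, In C Rs -> congruence C) ->
  (forall C, In C Rs -> exists w, ~ P w /\ C (w +' X) (w +' Y)) ->
  exists w, ~ P w /\ forall C, In C Rs -> C (w +' X) (w +' Y).
Proof.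
  induction Rs as [|C Rs IH]; intros Hc H.
  - exists 0'. split; [apply notP0; auto|intros _ []].
  - destruct (H C (or_introl eq_refl)) as [w1 [hw1 h1]].
    destruct IH as [w2 [hw2 h2]]; auto.
    { intros; apply Hc; right; auto. }
    { intros; apply H; right; auto. }
    exists (w1 +' w2). split; [apply notP_add; auto|].
    intros D [<-|hD].
    + rewrite (rearr1 w1 w2 X), (rearr1 w1 w2 Y). destruct (Hc C (or_introl eq_refl)) as [_ [_ [_ H4]]]. apply H4, h1.
    + rewrite !(addC w1 w2), (rearr1 w2 w1 X), (rearr1 w2 w1 Y).
      destruct (Hc D (or_intror hD)) as [_ [_ [_ H4]]]. apply H4, h2, hD.
Qed.

Lemma partA (R : Q -> Q -> Prop) (P : Q -> Prop) (HP : prime_ideal P) :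
  associated R P -> forall Rs, primary_decomposition R Rs -> exists C, In C Rs /\ P_primary C P.
Proof.
  intros [a [u [b [v [hu [hv [Hall Hn]]]]]]] Rs [Hpr HE].
  apply NNPP; intro Hno. apply Hn.
  destruct (comb P HP Rs (v +' a) (u +' b)) as [w [hw Hw]].
  - intros C hC; apply Hpr; auto.
  - intros C hC. destruct (Hpr C hC) as [Hc Hpc].
    destruct Hc as [C1 [C2 [C3 C4]]].
    destruct (classic (exists x, cls_nilpotent C x /\ ~ P x)) as [[x [[n hn] hx]]|N1].
    { exists (nsmul n x). split; [apply notP_nsmul; auto|].
      apply (C3 _ (nsmul n x)).
      - rewrite addC; apply hn.
      - apply C2. rewrite addC; apply hn. }
    destruct (classic (exists p, P p /\ ~ cls_nilpotent C p)) as [[p [hp hnp]]|N2].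
    { destruct (Hall p hp) as [w [hw Hw]].
      assert (Hc' : C (w +' v +' (a +' p)) (w +' u +' (b +' p))).
      { apply (proj1 (HE _ _) Hw); auto. }
      exists w; split; auto.
      destruct (Hpc p) as [|Hcan]; [contradiction|].
      apply Hcan. rewrite (addC p (w +' (v +' a))), (addC p (w +' (u +' b))), !addA. rewrite !addA in Hc'. exact Hc'. }
    exfalso. apply Hno. exists C. split; auto. split; [apply Hpr; auto|].
    intro q; split; intro h.
    + apply NNPP; intro h'. apply N2. eauto.
    + apply NNPP; intro h'. apply N1. eauto.
  - exists w. split; auto. rewrite <- !addA. apply (proj2 (HE _ _)). auto.
Qed.

Lemma down (L : list Q) : forall (G : Q -> Prop),
  (forall x y, G x -> G (x +' y)) -> (forall g, In g L -> exists N, G (nsmul N g)) ->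
  (forall x, (forall g, In g L -> G (x +' g)) -> G x) -> G 0'.
Proof.
  induction L as [|g L IH]; intros G Gi Gn Gc.
  - apply Gc. intros _ [].
  - destruct (Gn g (or_introl eq_refl)) as [N hN].
    assert (Hj : forall j x, G (x +' nsmul (N - j) g)).
    { induction j; intro x.
      - rewrite Nat.sub_0_r, addC. apply Gi; auto.
      - destruct (le_lt_dec N j) as [hle|hlt].
        + replace (N - S j) with (N - j) by lia. auto.
        + set (m := N - S j). assert (Hm : N - j = S m) by (unfold m; lia).
          assert (HG : G (0' +' nsmul m g)).
          { apply (IH (fun y => G (y +' nsmul m g))).
            - intros y z h. rewrite <- addA, (addC z), addA. apply Gi; auto.
            - intros g' hg'. destruct (Gn g' (or_intror hg')) as [N' h'].
              exists N'. apply Gi; auto.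
            - intros y hy. apply Gc. intros g0 [<-|hg0].
              + rewrite <- addA, (addC _ g). specialize (IHj y). rewrite Hm in IHj. exact IHj.
              + specialize (hy g0 hg0). rewrite <- addA, (addC _ g0), addA. exact hy. }
          rewrite add0l in HG. rewrite addC. apply Gi; auto. }
    specialize (Hj N 0'). rewrite Nat.sub_diag in Hj. simpl in Hj. rewrite add0r in Hj. exact Hj.
Qed.

Lemma prime_split (gens : list Q) (P : Q -> Prop) (HP : prime_ideal P) p :
  generated gens p -> P p -> exists g r, In g gens /\ P g /\ p = g +' r.
Proof.
  induction 1 as [|g Hg|a b _ IHa _ IHb]; intro h.
  - exfalso; apply (notP0 P HP); auto.
  - exists g, 0'. rewrite add0r; auto.
  - destruct HP as [Hi [_ [Hp _]]]. destruct (Hp a b h) as [ha|hb].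
    + destruct (IHa ha) as [g [r [h1 [h2 ->]]]]. exists g, (r +' b). rewrite addA; auto.
    + destruct (IHb hb) as [g [r [h1 [h2 ->]]]]. exists g, (r +' a).
      rewrite addC, addA; auto.
Qed.

Lemma filter_ex (P : Q -> Prop) (l : list Q) : exists L, forall g, In g L <-> In g l /\ P g.
Proof.
  induction l as [|h l [L HL]].
  - exists []. simpl; tauto.
  - destruct (classic (P h)) as [hh|hh].
    + exists (h :: L). intro g; simpl. rewrite HL. split; [intros [<-|?]|intros [[<-|?] ?]]; tauto.
    + exists L. intro g; simpl. rewrite HL. split; [tauto|intros [[<-|?] ?]; tauto].
Qed.

Lemma partB (hfg : fin_generated Q) (R : Q -> Q -> Prop) (P : Q -> Prop) (HP : prime_ideal P) :
  ~ associated R P ->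
  forall Rs1 C Rs2, primary_decomposition R (Rs1 ++ C :: Rs2) ->
  P_primary C P -> primary_decomposition R (Rs1 ++ Rs2).
Proof.
  intros Hna Rs1 C Rs2 [Hpr HE] [HCp HCP].
  assert (Hin : forall D, In D (Rs1 ++ C :: Rs2) <-> In D (Rs1 ++ Rs2) \/ D = C).
  { intro D; rewrite !in_app_iff; simpl; intuition. }
  assert (Key : forall a0 b0, (forall D, In D (Rs1 ++ Rs2) -> D a0 b0) -> C a0 b0).
  { intros a0 b0 Hab.
    destruct hfg as [gens Hg]. destruct (filter_ex P gens) as [L HL].
    set (G := fun x => loc_eq R P (a0 +' x) 0' (b0 +' x) 0').
    assert (G0 : G 0').
    { apply (down L).
      - intros x y [w [hw h]]. exists w. split; auto.
        rewrite !addA. apply (proj2 (HE _ _)). intros D hD.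
        destruct (Hpr D hD) as [[_ [_ [_ D4]]] _]. apply D4.
        rewrite !addA in h. apply (proj1 (HE _ _) h); auto.
      - intros g hg. apply HL in hg as [_ hPg].
        destruct (proj1 (HCP g) hPg) as [N hN]. exists N.
        exists 0'. split; [apply notP0; auto|]. rewrite !add0l.
        apply (proj2 (HE _ _)). intros D hD. apply Hin in hD as [hD| ->].
        + destruct (Hpr D (proj2 (Hin D) (or_introl hD))) as [[_ [_ [_ D4]]] _].
          apply D4, Hab, hD.
        + destruct HCp as [[_ [C2 [C3 _]]] _].
          apply (C3 _ (nsmul N g)); [apply hN|apply C2, hN].
      - intros x Hx. apply NNPP; intro Hn. apply Hna.
        exists (a0 +' x), 0', (b0 +' x), 0'. split; [apply notP0; auto|].
        split; [apply notP0; auto|]. split; [|exact Hn].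
        intros p hp. destruct (prime_split gens P HP p (Hg p) hp) as [g [r [h1 [h2 ->]]]].
        assert (hgL : In g L) by (apply HL; auto).
        destruct (Hx g hgL) as [w [hw h]]. exists w. split; auto.
        rewrite !addA in h. rewrite !addA. apply (proj2 (HE _ _)). intros D hD.
        destruct (Hpr D hD) as [[_ [_ [_ D4]]] _]. apply D4.
        apply (proj1 (HE _ _) h); auto. }
    destruct G0 as [w [hw h]].
    assert (hC : C (w +' 0' +' (a0 +' 0')) (w +' 0' +' (b0 +' 0'))).
    { apply (proj1 (HE _ _) h). apply Hin; auto. }
    rewrite !add0r in hC.
    destruct HCp as [_ Hpc]. destruct (Hpc w) as [hn|hc].
    - exfalso. apply hw. apply HCP; auto.
    - apply hc; auto. }
  split.
  - intros D hD. apply Hpr, Hin; auto.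
  - intros a b; split.
    + intros h D hD. apply (proj1 (HE a b) h). apply Hin; auto.
    + intros h. apply (proj2 (HE a b)). intros D hD. apply Hin in hD as [hD| ->]; [apply h, hD|apply Key, h].
Qed.

Lemma partC (R : Q -> Q -> Prop) (P : Q -> Prop) (HB : forall Rs1 C Rs2,
      primary_decomposition R (Rs1 ++ C :: Rs2) ->
      P_primary C P -> primary_decomposition R (Rs1 ++ Rs2)) :
  forall Rs2 Rs1, (forall C, In C Rs1 -> ~ P_primary C P) ->
  primary_decomposition R (Rs1 ++ Rs2) ->
  exists Rs, primary_decomposition R Rs /\ forall C, In C Rs -> ~ P_primary C P.
Proof.
  induction Rs2 as [|C Rs2 IH]; intros Rs1 H1 Hd.
  - rewrite app_nil_r in Hd. eauto.
  - destruct (classic (P_primary C P)) as [hC|hC].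
    + apply (IH Rs1); auto. apply (HB Rs1 C Rs2); auto.
    + apply (IH (Rs1 ++ [C])).
      * intros D hD. apply in_app_or in hD as [hD|[<-|[]]]; auto.
      * rewrite <- app_assoc. exact Hd.
Qed.
End Main.

Theorem theorem4p12 (Q : CMonoid) (hfg : fin_generated Q)
  (R : Q -> Q -> Prop) (hR : congruence R)
  (P : Q -> Prop) (hP : prime_ideal P) :
  (associated R P <->
     (forall Rs, primary_decomposition R Rs ->
        exists C, In C Rs /\ P_primary C P)) /\
  (~ associated R P ->
     forall Rs1 C Rs2, primary_decomposition R (Rs1 ++ C :: Rs2) ->
       P_primary C P -> primary_decomposition R (Rs1 ++ Rs2)).
Proof.
  split; [split|].
  - apply partA; auto.
  - intros H. apply NNPP; intro Hna.
    destruct (exists_decomp Q hfg R hR) as [Rs0 HRs0].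
    destruct (partC Q R P (partB Q hfg R P hP Hna) Rs0 []) as [Rs [HRs Hno]]; auto.
    destruct (H Rs HRs) as [C [hC hCP]]. apply (Hno C hC hCP).
  - apply partB; auto.
Qed.
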